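(* Let $A$ be an $n\times n$ nonsingular real matrix, $\hat\tau>0$, $\tau=\hat\tau\|A\|_2$, and let $\widetilde A=A+M_UM_\Sigma M_V^T$ where $M_U,M_V\in\mathbb{R}^{n\times m}$ have orthonormal columns and $M_\Sigma$ is $m\times m$ diagonal with entries in $(0,\tau]$. Let $F=M_\Sigma^{1/2}M_V^TA^{-1}M_UM_\Sigma^{1/2}$ and assume $F^HF+F+F^H$ is positive semidefinite (this holds in particular if $M_V^TA^{-1}M_U$ has positive semidefinite Hermitian part). Then $\widetilde A$ is nonsingular and $$\|\widetilde A^{-1}\|_2\le(1+\hat\tau\kappa_2(A))\|A^{-1}\|_2.$$
   Context: $\|\cdot\|_2$ is the spectral norm, $\kappa_2(A)=\|A\|_2\|A^{-1}\|_2$, $F^H$ is the conjugate transpose of $F$, and the Hermitian part of a matrix $X$ is $(X+X^H)/2$. *)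

(* Defs.v *)
From HB Require Import structures.
From mathcomp Require Import all_boot all_order all_algebra.
From mathcomp Require Import all_classical all_reals.
Set Implicit Arguments. Unset Strict Implicit. Unset Printing Implicit Defensive.
Import Order.TTheory GRing.Theory Num.Theory.
Local Open Scope ring_scope.
Local Open Scope classical_set_scope.

Section Defs.
Variable R : realType.

Definition vnorm2 (n : nat) (x : 'cV[R]_n) : R :=
  Num.sqrt (\sum_(i < n) x i 0 ^+ 2).

Definition spec_norm (m n : nat) (A : 'M[R]_(m, n)) : R :=
  sup [set vnorm2 (A *m x) | x in [set x : 'cV[R]_n | vnorm2 x <= 1]].

Definition kappa2 (n : nat) (A : 'M[R]_n) : R :=
  spec_norm A * spec_norm (invmx A).

Definition orthonormal_cols (n m : nat) (M : 'M[R]_(n, m)) : Prop :=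
  M^T *m M = 1%:M.

(* positive semidefinite (real symmetric) matrix; for real F, F^H = F^T *)
Definition psd (n : nat) (S : 'M[R]_n) : Prop :=
  S^T = S /\ forall x : 'cV[R]_n, 0 <= (x^T *m S *m x) 0 0.

End Defs.

(* Main.v *)
Require Import Defs.
From HB Require Import structures.
From mathcomp Require Import all_boot all_order all_algebra.
From mathcomp Require Import all_classical all_reals.
From mathcomp Require Import ring lra.
Import Order.TTheory GRing.Theory Num.Theory.
Set Implicit Arguments. Unset Strict Implicit. Unset Printing Implicit Defensive.
Local Open Scope ring_scope.
Local Open Scope classical_set_scope.

Section Helpers.
Variable R : realType.

Definition ip (n : nat) (x y : 'cV[R]_n) : R := \sum_i x i 0 * y i 0.

Lemma ipE n (x y : 'cV[R]_n) : ip x y = (x^T *m y) 0 0.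
Proof. by rewrite /ip mxE; apply: eq_bigr => i _; rewrite mxE. Qed.

Lemma ip_ge0 n (x : 'cV[R]_n) : 0 <= ip x x.
Proof. by apply: sumr_ge0 => i _; rewrite -expr2 sqr_ge0. Qed.

Lemma vnorm2E n (x : 'cV[R]_n) : vnorm2 x = Num.sqrt (ip x x).
Proof. by rewrite /vnorm2 /ip; congr Num.sqrt; apply: eq_bigr => i _; rewrite expr2. Qed.

Lemma vnorm2_ge0 n (x : 'cV[R]_n) : 0 <= vnorm2 x.
Proof. by rewrite vnorm2E sqrtr_ge0. Qed.

Lemma vnorm2_sq n (x : 'cV[R]_n) : vnorm2 x ^+ 2 = ip x x.
Proof. by rewrite vnorm2E sqr_sqrtr // ip_ge0. Qed.

Lemma ip_sym n (x y : 'cV[R]_n) : ip x y = ip y x.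
Proof. by apply: eq_bigr => i _; rewrite mulrC. Qed.

Lemma ip_mul p q (M : 'M[R]_(p, q)) x y : ip (M *m x) y = ip x (M^T *m y).
Proof. by rewrite !ipE trmx_mul mulmxA. Qed.


Lemma ip0_eq0 n (x : 'cV[R]_n) : ip x x = 0 -> x = 0.
Proof.
move=> h; apply/matrixP => i j; rewrite (ord1 j) mxE.
have h0 : forall k : 'I_n, xpredT k -> 0 <= x k 0 * x k 0.
  by move=> k _; rewrite -expr2 sqr_ge0.
have := psumr_eq0P h0 h; move/(_ i isT).
by move/eqP; rewrite mulf_eq0 orbb => /eqP.
Qed.

Lemma vnorm2_eq0 n (x : 'cV[R]_n) : vnorm2 x = 0 -> x = 0.
Proof.
move=> h; apply: ip0_eq0; apply/eqP; rewrite eq_le ip_ge0 andbT -sqrtr_eq0.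
by rewrite -vnorm2E h.
Qed.

Lemma vnorm20 n : vnorm2 (0 : 'cV[R]_n) = 0.
Proof. by rewrite vnorm2E /ip big1 ?sqrtr0 // => i _; rewrite mxE mul0r. Qed.

Lemma ip_scale n (a b : R) (x y : 'cV[R]_n) :
  ip (a *: x - b *: y) (a *: x - b *: y) =
  a ^+ 2 * ip x x - 2 * a * b * ip x y + b ^+ 2 * ip y y.
Proof.
rewrite /ip !mulr_sumr -sumrB -big_split /=; apply: eq_bigr => i _.
rewrite !mxE; ring.
Qed.

Lemma ip_add n (x y : 'cV[R]_n) :
  ip (x + y) (x + y) = ip x x + 2 * ip x y + ip y y.
Proof.
rewrite /ip mulr_sumr -!big_split /=; apply: eq_bigr => i _.
rewrite !mxE; ring.
Qed.

Lemma CS n (x y : 'cV[R]_n) : ip x y <= vnorm2 x * vnorm2 y.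
Proof.
set a := vnorm2 x; set b := vnorm2 y.
have ha : 0 <= a := vnorm2_ge0 x. have hb : 0 <= b := vnorm2_ge0 y.
have [a0|apos] := eqVneq a 0.
  by rewrite (vnorm2_eq0 a0) /ip big1 ?mulr_ge0 // => i _; rewrite mxE mul0r.
have [b0|bpos] := eqVneq b 0.
  by rewrite (vnorm2_eq0 b0) /ip big1 ?mulr_ge0 // => i _; rewrite mxE mulr0.
have h := ip_ge0 (b *: x - a *: y).
rewrite ip_scale -!vnorm2_sq -/a -/b in h.
have hab : 0 < a * b by rewrite mulr_gt0 // lt0r ?apos ?bpos.
nra.
Qed.

Lemma vnorm2_add n (x y : 'cV[R]_n) : vnorm2 (x + y) <= vnorm2 x + vnorm2 y.
Proof.
rewrite [vnorm2 (x + y)]vnorm2E -(ger0_norm (addr_ge0 (vnorm2_ge0 x) (vnorm2_ge0 y))).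
rewrite -sqrtr_sqr ler_sqrt ?sqr_ge0 // ip_add -!vnorm2_sq.
have := CS x y; nra.
Qed.

Lemma vnorm2N n (x : 'cV[R]_n) : vnorm2 (- x) = vnorm2 x.
Proof. by rewrite !vnorm2E /ip; congr Num.sqrt; apply: eq_bigr => i _; rewrite mxE mulrNN. Qed.

Lemma vnorm2_sub n (x y : 'cV[R]_n) : vnorm2 (x - y) <= vnorm2 x + vnorm2 y.
Proof. by rewrite -(vnorm2N y); apply: vnorm2_add. Qed.

Lemma vnorm2Z n (k : R) (x : 'cV[R]_n) : vnorm2 (k *: x) = `|k| * vnorm2 x.
Proof.
rewrite !vnorm2E -sqrtr_sqr -sqrtrM ?sqr_ge0 //; congr Num.sqrt.
rewrite /ip mulr_sumr; apply: eq_bigr => i _; rewrite !mxE; ring.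
Qed.

Lemma vnorm2_le_ip p q (u : 'cV[R]_p) (v : 'cV[R]_q) c :
  0 <= c -> ip u u <= c ^+ 2 * ip v v -> vnorm2 u <= c * vnorm2 v.
Proof.
move=> c0 h; rewrite !vnorm2E -{1}(ger0_norm c0) -sqrtr_sqr -sqrtrM ?sqr_ge0 //.
by apply: ler_wsqrtr.
Qed.


Lemma orth_norm n m (U : 'M[R]_(n, m)) z :
  orthonormal_cols U -> vnorm2 (U *m z) = vnorm2 z.
Proof. by move=> hU; rewrite !vnorm2E ip_mul mulmxA hU mul1mx. Qed.

Lemma orthT_norm n m (V : 'M[R]_(n, m)) w :
  orthonormal_cols V -> vnorm2 (V^T *m w) <= vnorm2 w.
Proof.
move=> hV; set z := V^T *m w.
have h : vnorm2 z ^+ 2 <= vnorm2 w * vnorm2 z.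
  rewrite vnorm2_sq {1}/z ip_mul trmxK -(orth_norm z hV); exact: CS.
have hz := vnorm2_ge0 z; have hw := vnorm2_ge0 w.
have [z0|zpos] := eqVneq (vnorm2 z) 0; first by rewrite z0.
have : 0 < vnorm2 z by rewrite lt0r zpos hz.
nra.
Qed.

Lemma diag_norm m (d : 'rV[R]_m) t z :
  0 <= t -> (forall i, 0 < d 0 i /\ d 0 i <= t) ->
  vnorm2 (diag_mx (map_mx Num.sqrt d) *m z) <= Num.sqrt t * vnorm2 z.
Proof.
move=> t0 hd; apply: vnorm2_le_ip; first exact: sqrtr_ge0.
rewrite sqr_sqrtr // /ip mulr_sumr; apply: ler_sum => i _.
rewrite mul_diag_mx !mxE.
have [h1 h2] := hd i.
have -> : Num.sqrt (d 0 i) * z i 0 * (Num.sqrt (d 0 i) * z i 0) =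
  Num.sqrt (d 0 i) ^+ 2 * (z i 0 * z i 0) by ring.
rewrite sqr_sqrtr; last exact: ltW.
by apply: ler_wpM2r => //; rewrite -expr2 sqr_ge0.
Qed.

Lemma entry_le1 n (x : 'cV[R]_n) j : vnorm2 x <= 1 -> `|x j 0| <= 1.
Proof.
move=> h.
have h1 : ip x x <= 1 by rewrite -vnorm2_sq; have := vnorm2_ge0 x; nra.
have h2 : x j 0 * x j 0 <= ip x x.
  rewrite /ip (bigD1 j) //= lerDl; apply: sumr_ge0 => i _.
  by rewrite -expr2 sqr_ge0.
have h3 : `|x j 0| ^+ 2 <= 1 by rewrite real_normK ?num_real // expr2; apply: le_trans h1.
have := normr_ge0 (x j 0); nra.
Qed.

Lemma spec_bounded p q (M : 'M[R]_(p, q)) :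
  has_ubound [set vnorm2 (M *m x) | x in [set x : 'cV[R]_q | vnorm2 x <= 1]].
Proof.
exists (Num.sqrt (\sum_i (\sum_j `|M i j|) ^+ 2)).
move=> _ [x hx <-]; rewrite vnorm2E; apply: ler_wsqrtr.
rewrite /ip; apply: ler_sum => i _; rewrite -expr2.
have hs : `|(M *m x) i 0| <= \sum_j `|M i j|.
  rewrite mxE; apply: le_trans (ler_norm_sum _ _ _) _; apply: ler_sum => j _.
  rewrite normrM; rewrite -[leRHS]mulr1; apply: ler_wpM2l => //.
  exact: entry_le1.
rewrite -real_normK ?num_real // !expr2.
by apply: ler_pM.
Qed.

Lemma spec_norm_ge0 p q (M : 'M[R]_(p, q)) : 0 <= spec_norm M.
Proof.
have h : [set vnorm2 (M *m x) | x in [set x : 'cV[R]_q | vnorm2 x <= 1]]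
  (vnorm2 (M *m 0)) by exists 0 => //=; rewrite vnorm20 ler01.
have := ub_le_sup (spec_bounded M) h.
by rewrite mulmx0 vnorm20.
Qed.

Lemma spec_norm_ub p q (M : 'M[R]_(p, q)) x :
  vnorm2 (M *m x) <= spec_norm M * vnorm2 x.
Proof.
have [x0|xpos] := eqVneq (vnorm2 x) 0.
  by rewrite (vnorm2_eq0 x0) mulmx0 !vnorm20 mulr0.
set c := vnorm2 x.
have cpos : 0 < c by rewrite lt0r xpos vnorm2_ge0.
have cinv : 0 <= c^-1 by rewrite invr_ge0 ltW.
have h : vnorm2 (M *m (c^-1 *: x)) <= spec_norm M.
  apply: (ub_le_sup (spec_bounded M)); exists (c^-1 *: x) => //=.
  by rewrite /= vnorm2Z (ger0_norm cinv) mulVf.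
rewrite -scalemxAr vnorm2Z (ger0_norm cinv) in h.
by rewrite -ler_pdivrMr // mulrC.
Qed.

Lemma spec_norm_le p q (M : 'M[R]_(p, q)) c :
  (forall x, vnorm2 x <= 1 -> vnorm2 (M *m x) <= c) -> spec_norm M <= c.
Proof.
move=> h; apply: ge_sup.
  by exists (vnorm2 (M *m 0)), 0 => //=; rewrite vnorm20.
by move=> _ [x hx <-]; apply: h.
Qed.


Lemma ip_addr n (x y z : 'cV[R]_n) : ip x (y + z) = ip x y + ip x z.
Proof. by rewrite /ip -big_split; apply: eq_bigr => i _; rewrite mxE mulrDr. Qed.

Lemma woodbury n m (A Ai : 'M[R]_n) (U V : 'M[R]_(n, m)) (H Gi : 'M[R]_m) :
  A *m Ai = 1%:M -> (1%:M + H *m V^T *m Ai *m U *m H) *m Gi = 1%:M ->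
  (A + U *m (H *m H) *m V^T) *m (Ai - Ai *m U *m H *m Gi *m (H *m V^T *m Ai))
  = 1%:M.
Proof.
move=> e1 e2.
have k : U *m H *m Gi *m H *m V^T *m Ai +
  U *m H *m H *m V^T *m Ai *m U *m H *m Gi *m H *m V^T *m Ai =
  U *m H *m H *m V^T *m Ai.
  have := congr1 (fun X => U *m H *m X *m (H *m V^T *m Ai)) e2.
  by rewrite /= mulmxDl mul1mx mulmxDr mulmxDl !mulmxA mulmx1.
rewrite mulmxDl !mulmxBr !mulmxA e1 mul1mx -{1}k.
by rewrite addrK subrK.
Qed.

End Helpers.

Theorem mainTheorem14 (R : realType) (n m : nat) (A : 'M[R]_n) (tauhat : R)
  (MU MV : 'M[R]_(n, m)) (d : 'rV[R]_m) :
  A \in unitmx ->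
  0 < tauhat ->
  orthonormal_cols MU -> orthonormal_cols MV ->
  (forall i, 0 < d 0 i /\ d 0 i <= tauhat * spec_norm A) ->
  let MSigma := diag_mx d in
  let MSigma_half := diag_mx (map_mx Num.sqrt d) in
  let F := MSigma_half *m MV^T *m invmx A *m MU *m MSigma_half in
  psd (F^T *m F + F + F^T) ->
  let At := A + MU *m MSigma *m MV^T in
  At \in unitmx /\
  spec_norm (invmx At) <= (1 + tauhat * kappa2 A) * spec_norm (invmx A).
Proof.
move=> hA htau hU hV hd MSigma H F [_ hpsd] At.
have tau0 : 0 <= tauhat * spec_norm A by apply: mulr_ge0; [exact: ltW | exact: spec_norm_ge0].
have hS : MSigma = H *m H.
  rewrite /MSigma /H mulmx_diag; congr diag_mx; apply/rowP => j.
  by rewrite !mxE -expr2 sqr_sqrtr // ltW //; case: (hd j).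
pose G := 1%:M + F.
have GtG : G^T *m G = 1%:M + (F^T *m F + F + F^T).
  rewrite /G [_^T]linearD /= trmx1 mulmxDl !mulmxDr !mul1mx !mulmx1 -addrA.
  by congr (_ + _); rewrite [F^T + _]addrC addrA [F + _]addrC.
have hG : forall x, vnorm2 x <= vnorm2 (G *m x).
  move=> x; rewrite !vnorm2E; apply: ler_wsqrtr.
  rewrite ip_mul mulmxA GtG mulmxDl mul1mx ip_addr lerDl ipE mulmxA.
  exact: hpsd.
have Gu : G \in unitmx.
  rewrite -unitmx_tr -row_free_unit; apply: inj_row_free => v hv.
  have h : G *m v^T = 0 by have := congr1 trmx hv; rewrite trmx_mul trmxK trmx0.
  have h2 := hG v^T; rewrite h vnorm20 in h2.
  have : vnorm2 v^T = 0 by apply/eqP; rewrite eq_le h2 vnorm2_ge0.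
  by move/vnorm2_eq0/(congr1 trmx); rewrite trmxK trmx0.
have hGi : forall y, vnorm2 (invmx G *m y) <= vnorm2 y.
  by move=> y; have := hG (invmx G *m y); rewrite mulmxA mulmxV // mul1mx.
set Ai := invmx A.
set B := Ai - Ai *m MU *m H *m invmx G *m (H *m MV^T *m Ai).
have AtB : At *m B = 1%:M.
  rewrite /At hS; apply: woodbury; first exact: mulmxV.
  exact: mulmxV.
have [Atu _] := mulmx1_unit AtB.
split => //.
have -> : invmx At = B.
  by rewrite -[invmx At]mulmx1 -AtB mulmxA mulVmx // mul1mx.
set a := spec_norm Ai.
have a0 : 0 <= a := spec_norm_ge0 Ai.
set s := Num.sqrt (tauhat * spec_norm A).
have s0 : 0 <= s := sqrtr_ge0 _.
have hdt : forall i, 0 < d 0 i /\ d 0 i <= tauhat * spec_norm A by [].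
apply: spec_norm_le => y hy.
have hy0 := vnorm2_ge0 y.
rewrite mulmxBl.
apply: le_trans (vnorm2_sub _ _) _.
have h1 : vnorm2 (Ai *m y) <= a.
  apply: le_trans (spec_norm_ub _ _) _; rewrite -[leRHS]mulr1.
  exact: ler_wpM2l.
have h2 : vnorm2 (MV^T *m (Ai *m y)) <= a := le_trans (orthT_norm _ hV) h1.
have h3 : vnorm2 (H *m (MV^T *m (Ai *m y))) <= s * a.
  apply: le_trans (diag_norm _ tau0 hdt) _; exact: ler_wpM2l.
have h4 : vnorm2 (invmx G *m (H *m (MV^T *m (Ai *m y)))) <= s * a :=
  le_trans (hGi _) h3.
have h5 : vnorm2 (H *m (invmx G *m (H *m (MV^T *m (Ai *m y))))) <= s * (s * a).
  apply: le_trans (diag_norm _ tau0 hdt) _; exact: ler_wpM2l.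
have h6 : vnorm2 (MU *m (H *m (invmx G *m (H *m (MV^T *m (Ai *m y)))))) <= s * (s * a).
  by rewrite orth_norm.
have h7 : vnorm2 (Ai *m (MU *m (H *m (invmx G *m (H *m (MV^T *m (Ai *m y))))))) <= a * (s * (s * a)).
  apply: le_trans (spec_norm_ub _ _) _; exact: ler_wpM2l.
rewrite !mulmxA in h7.
have ss : s * s = tauhat * spec_norm A by rewrite -expr2 sqr_sqrtr.
have -> : (1 + tauhat * kappa2 A) * a = a + a * (s * (s * a)).
  by rewrite mulrA ss /kappa2 -/Ai -/a; ring.
by rewrite !mulmxA; apply: lerD.
Qed.
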